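(* Let $(\mathbb{X},\otimes,K)$ be a linear category with monoidal coalgebra modality $(!, \delta, \varepsilon, \Delta, \mathsf{e}, \mathsf{m},\mathsf{m}_K)$, and let $(\mathsf{T},\mu,\eta,\mathsf{n},\mathsf{n}_K,\lambda)$ be a $\mathsf{MELL}$ lifting monad on it. Then the Eilenberg-Moore category $(\mathbb{X}^\mathsf{T},\otimes^\mathsf{n},(K,\mathsf{n}_K))$ is a linear category such that the forgetful functor $\mathsf{U}^\mathsf{T}$ preserves the linear category structure (symmetric monoidal closed structure and monoidal coalgebra modality) strictly.
   Context: Composition is in diagrammatic order. A linear category is a symmetric monoidal closed category equipped with a monoidal coalgebra modality $(!,\delta,\varepsilon,\Delta,\mathsf{e},\mathsf{m},\mathsf{m}_K)$: a symmetric monoidal comonad $(!,\delta,\varepsilon,\mathsf{m},\mathsf{m}_K)$, with $\mathsf{m}_{A,B}:!(A)\otimes!(B)\to!(A\otimes B)$ and $\mathsf{m}_K:K\to!(K)$, together with natural cocommutative comonoids $(!(A),\Delta_A,\mathsf{e}_A)$ such that $\delta_A$ is a comonoid morphism and $\Delta,\mathsf{e}$ are monoidal transformations and $!$-coalgebra morphisms. A symmetric comonoidal monad $(\mathsf{T},\mu,\eta,\mathsf{n},\mathsf{n}_K)$ is a monad with symmetric oplax monoidal structure $\mathsf{n}_{A,B}:\mathsf{T}(A\otimes B)\to\mathsf{T}(A)\otimes\mathsf{T}(B)$, $\mathsf{n}_K:\mathsf{T}(K)\to K$ compatible with $\mu,\eta$; its Eilenberg-Moore category has tensor $(A,\nu)\otimes^\mathsf{n}(B,\nu')=(A\otimes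 B,\mathsf{n}_{A,B};(\nu\otimes\nu'))$ and unit $(K,\mathsf{n}_K)$. It is a symmetric Hopf monad if its fusion operators $\mathsf{h}^l_{A,B}=\mathsf{n}_{A,\mathsf{T}(B)};(1_{\mathsf{T}(A)}\otimes\mu_B):\mathsf{T}(A\otimes\mathsf{T}(B))\to\mathsf{T}(A)\otimes\mathsf{T}(B)$ and $\mathsf{h}^r_{A,B}=\mathsf{n}_{\mathsf{T}(A),B};(\mu_A\otimes1_{\mathsf{T}(B)}):\mathsf{T}(\mathsf{T}(A)\otimes B)\to\mathsf{T}(A)\otimes\mathsf{T}(B)$ are isomorphisms. An exponential lifting monad is a symmetric comonoidal monad with a symmetric monoidal mixed distributive law $\lambda_A:\mathsf{T}!(A)\to!\mathsf{T}(A)$ over the monoidal coalgebra modality, i.e. $\mu_{!(A)};\lambda_A=\mathsf{T}(\lambda_A);\lambda_{\mathsf{T}(A)};!(\mu_A)$, $\eta_{!(A)};\lambda_A=!(\eta_A)$, $\mathsf{T}(\delta_A);\lambda_{!(A)};!(\lambda_A)=\lambda_A;\delta_{\mathsf{T}(A)}$, $\lambda_A;\varepsilon_{\mathsf{T}(A)}=\mathsf{T}(\varepsilon_A)$, $\mathsf{n}_{!(A),!(B)};(\lambda_A\otimes\lambda_B);\mathsf{m}_{\mathsf{T}(A),\mathsf{T}(B)}=\mathsf{T}(\mathsf{m}_{A,B});\lambda_{A\otimes B};!(\mathsf{n}_{A,B})$, $\mathsf{n}_K;\mathsf{m}_K=\mathsf{T}(\mathsf{m}_K);\lambda_K;!(\mathsf{n}_K)$.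 A $\mathsf{MELL}$ lifting monad on a linear category is an exponential lifting monad whose underlying symmetric comonoidal monad is a symmetric Hopf monad. *)

(* Defs.v *)
(* Composition is written in DIAGRAMMATIC
   order: f ;; g means "first f, then g". *)
From Stdlib Require Import ProofIrrelevance.

Set Implicit Arguments.
Unset Strict Implicit.

Record Category := {
  Ob :> Type;
  Hom : Ob -> Ob -> Type;
  comp : forall a b c : Ob, Hom a b -> Hom b c -> Hom a c;
  idm : forall a : Ob, Hom a a;
  comp_idl : forall a b (f : Hom a b), comp (idm a) f = f;
  comp_idr : forall a b (f : Hom a b), comp f (idm b) = f;
  comp_assoc : forall a b c d (f : Hom a b) (g : Hom b c) (h : Hom c d),
      comp (comp f g) h = comp f (comp g h) }.

Arguments Hom {C} _ _ : rename.
Arguments comp {C a b c} _ _ : rename.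
Arguments idm {C} _ : rename.
Arguments comp_idl {C a b} _ : rename.
Arguments comp_idr {C a b} _ : rename.
Arguments comp_assoc {C a b c d} _ _ _ : rename.

Notation "f ;; g" := (comp f g) (at level 40, left associativity).

(** Heterogeneous equality of morphisms (equality of the triples
    (source, target, morphism)); used to express that a functor preserves
    structure *strictly* (on the nose). *)
Definition hom_heq {C : Category} {a b a' b' : C} (f : Hom a b) (g : Hom a' b')
  : Prop :=
  existT (fun p : C * C => Hom (fst p) (snd p)) (a, b) f
  = existT (fun p : C * C => Hom (fst p) (snd p)) (a', b') g.

Section SMCDef.
Variable C : Category.

Record SMCData := {
  tens : C -> C -> C;
  tensh : forall a b c d : C, Hom a b -> Hom c d -> Hom (tens a c) (tens b d);
  unitK : C;
  alpha : forall a b c : C, Hom (tens (tens a b) c) (tens a (tens b c));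
  alpha_inv : forall a b c : C, Hom (tens a (tens b c)) (tens (tens a b) c);
  lu : forall a : C, Hom (tens unitK a) a;
  lu_inv : forall a : C, Hom a (tens unitK a);
  ru : forall a : C, Hom (tens a unitK) a;
  ru_inv : forall a : C, Hom a (tens a unitK);
  sym : forall a b : C, Hom (tens a b) (tens b a) }.
End SMCDef.

Arguments tens {C} V _ _ : rename.
Arguments tensh {C} V {a b c d} _ _ : rename.
Arguments unitK {C} V : rename.
Arguments alpha {C} V _ _ _ : rename.
Arguments alpha_inv {C} V _ _ _ : rename.
Arguments lu {C} V _ : rename.
Arguments lu_inv {C} V _ : rename.
Arguments ru {C} V _ : rename.
Arguments ru_inv {C} V _ : rename.
Arguments sym {C} V _ _ : rename.

Section SMCAxioms.
Context {C : Category} (V : SMCData C).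
Local Notation "a ⊗ b" := (tens V a b) (at level 30, right associativity).
Local Notation "f ⊠ g" := (tensh V f g) (at level 30, right associativity).
Local Notation K := (unitK V).

Record isSMC : Prop := {
  tensh_id : forall a b : C, idm a ⊠ idm b = idm (a ⊗ b);
  tensh_comp : forall a b c a' b' c' (f : Hom a b) (g : Hom b c)
      (f' : Hom a' b') (g' : Hom b' c'),
      (f ;; g) ⊠ (f' ;; g') = (f ⊠ f') ;; (g ⊠ g');
  alpha_nat : forall a b c a' b' c' (f : Hom a a') (g : Hom b b') (h : Hom c c'),
      ((f ⊠ g) ⊠ h) ;; alpha V a' b' c' = alpha V a b c ;; (f ⊠ (g ⊠ h));
  alpha_iso1 : forall a b c, alpha V a b c ;; alpha_inv V a b c = idm _;
  alpha_iso2 : forall a b c, alpha_inv V a b c ;; alpha V a b c = idm _;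
  lu_nat : forall a b (f : Hom a b), (idm K ⊠ f) ;; lu V b = lu V a ;; f;
  lu_iso1 : forall a, lu V a ;; lu_inv V a = idm _;
  lu_iso2 : forall a, lu_inv V a ;; lu V a = idm _;
  ru_nat : forall a b (f : Hom a b), (f ⊠ idm K) ;; ru V b = ru V a ;; f;
  ru_iso1 : forall a, ru V a ;; ru_inv V a = idm _;
  ru_iso2 : forall a, ru_inv V a ;; ru V a = idm _;
  sym_nat : forall a b a' b' (f : Hom a a') (g : Hom b b'),
      (f ⊠ g) ;; sym V a' b' = sym V a b ;; (g ⊠ f);
  sym_invol : forall a b, sym V a b ;; sym V b a = idm _;
  pentagon : forall a b c d,
      alpha V (a ⊗ b) c d ;; alpha V a b (c ⊗ d)
      = (alpha V a b c ⊠ idm d) ;; alpha V a (b ⊗ c) d ;; (idm a ⊠ alpha V b c d);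
  triangle : forall a b,
      alpha V a K b ;; (idm a ⊠ lu V b) = ru V a ⊠ idm b;
  hexagon : forall a b c,
      alpha V a b c ;; sym V a (b ⊗ c) ;; alpha V b c a
      = (sym V a b ⊠ idm c) ;; alpha V b a c ;; (idm b ⊠ sym V a c) }.

Record ClosedData := {
  ihom : C -> C -> C;
  ev : forall a b : C, Hom (a ⊗ ihom a b) b;
  cur : forall a b c : C, Hom (a ⊗ c) b -> Hom c (ihom a b) }.

Record isClosed (W : ClosedData) : Prop := {
  cur_beta : forall a b c (f : Hom (a ⊗ c) b),
      (idm a ⊠ cur W f) ;; ev W a b = f;
  cur_eta : forall a b c (g : Hom c (ihom W a b)),
      cur W ((idm a ⊠ g) ;; ev W a b) = g }.

Definition interchange (w x y z : C) : Hom ((w ⊗ x) ⊗ (y ⊗ z)) ((w ⊗ y) ⊗ (x ⊗ z)) :=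
  alpha V w x (y ⊗ z) ;; (idm w ⊠ alpha_inv V x y z)
  ;; (idm w ⊠ (sym V x y ⊠ idm z)) ;; (idm w ⊠ alpha V y x z)
  ;; alpha_inv V w y (x ⊗ z).

Record MCMData := {
  bob : C -> C;
  bhom : forall a b : C, Hom a b -> Hom (bob a) (bob b);
  delta : forall a : C, Hom (bob a) (bob (bob a));
  eps : forall a : C, Hom (bob a) a;
  dup : forall a : C, Hom (bob a) (bob a ⊗ bob a);
  er : forall a : C, Hom (bob a) K;
  mm : forall a b : C, Hom (bob a ⊗ bob b) (bob (a ⊗ b));
  mK : Hom K (bob K) }.

Section MCMAx.
Variable B : MCMData.
Local Notation "! a" := (bob B a) (at level 20, right associativity).
Local Notation "!h f" := (bhom B f) (at level 20, right associativity).
Local Notation δ := (delta B).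
Local Notation ε := (eps B).
Local Notation Δ := (dup B).
Local Notation e := (er B).
Local Notation m := (mm B).
Local Notation mk := (mK B).

Record isMCM : Prop := {
  bhom_id : forall a, !h (idm a) = idm (! a);
  bhom_comp : forall a b c (f : Hom a b) (g : Hom b c), !h (f ;; g) = !h f ;; !h g;
  delta_nat : forall a b (f : Hom a b), !h f ;; δ b = δ a ;; !h (!h f);
  eps_nat : forall a b (f : Hom a b), !h f ;; ε b = ε a ;; f;
  comonad_counit_l : forall a, δ a ;; ε (! a) = idm (! a);
  comonad_counit_r : forall a, δ a ;; !h (ε a) = idm (! a);
  comonad_coassoc : forall a, δ a ;; δ (! a) = δ a ;; !h (δ a);
  m_nat : forall a b a' b' (f : Hom a a') (g : Hom b b'),
      (!h f ⊠ !h g) ;; m a' b' = m a b ;; !h (f ⊠ g);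
  m_assoc : forall a b c,
      alpha V (! a) (! b) (! c) ;; (idm (! a) ⊠ m b c) ;; m a (b ⊗ c)
      = (m a b ⊠ idm (! c)) ;; m (a ⊗ b) c ;; !h (alpha V a b c);
  m_lunit : forall a, lu V (! a) = (mk ⊠ idm (! a)) ;; m K a ;; !h (lu V a);
  m_runit : forall a, ru V (! a) = (idm (! a) ⊠ mk) ;; m a K ;; !h (ru V a);
  m_sym : forall a b, sym V (! a) (! b) ;; m b a = m a b ;; !h (sym V a b);
  delta_m : forall a b,
      m a b ;; δ (a ⊗ b) = (δ a ⊠ δ b) ;; m (! a) (! b) ;; !h (m a b);
  delta_mK : mk ;; δ K = mk ;; !h mk;
  eps_m : forall a b, m a b ;; ε (a ⊗ b) = ε a ⊠ ε b;
  eps_mK : mk ;; ε K = idm K;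
  dup_nat : forall a b (f : Hom a b), !h f ;; Δ b = Δ a ;; (!h f ⊠ !h f);
  er_nat : forall a b (f : Hom a b), !h f ;; e b = e a;
  dup_coassoc : forall a,
      Δ a ;; (Δ a ⊠ idm (! a)) ;; alpha V (! a) (! a) (! a) = Δ a ;; (idm (! a) ⊠ Δ a);
  dup_counit_l : forall a, Δ a ;; (e a ⊠ idm (! a)) ;; lu V (! a) = idm (! a);
  dup_counit_r : forall a, Δ a ;; (idm (! a) ⊠ e a) ;; ru V (! a) = idm (! a);
  dup_cocomm : forall a, Δ a ;; sym V (! a) (! a) = Δ a;
  delta_dup : forall a, δ a ;; Δ (! a) = Δ a ;; (δ a ⊠ δ a);
  delta_er : forall a, δ a ;; e (! a) = e a;
  dup_m : forall a b,
      m a b ;; Δ (a ⊗ b)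
      = (Δ a ⊠ Δ b) ;; interchange (! a) (! a) (! b) (! b) ;; (m a b ⊠ m a b);
  dup_mK : mk ;; Δ K = lu_inv V K ;; (mk ⊠ mk);
  er_m : forall a b, m a b ;; e (a ⊗ b) = (e a ⊠ e b) ;; lu V K;
  er_mK : mk ;; e K = idm K;
  dup_coalg : forall a, δ a ;; !h (Δ a) = Δ a ;; (δ a ⊠ δ a) ;; m (! a) (! a);
  er_coalg : forall a, δ a ;; !h (e a) = e a ;; mk }.
End MCMAx.

Record MonadData := {
  Tob : C -> C;
  Thom : forall a b : C, Hom a b -> Hom (Tob a) (Tob b);
  mu : forall a : C, Hom (Tob (Tob a)) (Tob a);
  eta : forall a : C, Hom a (Tob a);
  nn : forall a b : C, Hom (Tob (a ⊗ b)) (Tob a ⊗ Tob b);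
  nK : Hom (Tob K) K }.

Section MonadAx.
Variable M : MonadData.
Local Notation T := (Tob M).
Local Notation Th := (Thom M).
Local Notation μ := (mu M).
Local Notation η := (eta M).
Local Notation n := (nn M).
Local Notation nk := (nK M).

Record isSCMonad : Prop := {
  Thom_id : forall a, Th (idm a) = idm (T a);
  Thom_comp : forall a b c (f : Hom a b) (g : Hom b c), Th (f ;; g) = Th f ;; Th g;
  mu_nat : forall a b (f : Hom a b), Th (Th f) ;; μ b = μ a ;; Th f;
  eta_nat : forall a b (f : Hom a b), f ;; η b = η a ;; Th f;
  mu_assoc : forall a, μ (T a) ;; μ a = Th (μ a) ;; μ a;
  mu_eta_l : forall a, η (T a) ;; μ a = idm (T a);
  mu_eta_r : forall a, Th (η a) ;; μ a = idm (T a);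
  nn_nat : forall a b a' b' (f : Hom a a') (g : Hom b b'),
      Th (f ⊠ g) ;; n a' b' = n a b ;; (Th f ⊠ Th g);
  nn_assoc : forall a b c,
      Th (alpha V a b c) ;; n a (b ⊗ c) ;; (idm (T a) ⊠ n b c)
      = n (a ⊗ b) c ;; (n a b ⊠ idm (T c)) ;; alpha V (T a) (T b) (T c);
  nn_lunit : forall a, n K a ;; (nk ⊠ idm (T a)) ;; lu V (T a) = Th (lu V a);
  nn_runit : forall a, n a K ;; (idm (T a) ⊠ nk) ;; ru V (T a) = Th (ru V a);
  nn_sym : forall a b, n a b ;; sym V (T a) (T b) = Th (sym V a b) ;; n b a;
  mu_nn : forall a b, μ (a ⊗ b) ;; n a b = Th (n a b) ;; n (T a) (T b) ;; (μ a ⊠ μ b);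
  mu_nK : μ K ;; nk = Th nk ;; nk;
  eta_nn : forall a b, η (a ⊗ b) ;; n a b = η a ⊠ η b;
  eta_nK : η K ;; nk = idm K }.

Definition fusion_l (a b : C) : Hom (T (a ⊗ T b)) (T a ⊗ T b) :=
  n a (T b) ;; (idm (T a) ⊠ μ b).
Definition fusion_r (a b : C) : Hom (T (T a ⊗ b)) (T a ⊗ T b) :=
  n (T a) b ;; (μ a ⊠ idm (T b)).

Definition is_iso {a b : C} (f : Hom a b) : Prop :=
  exists g : Hom b a, f ;; g = idm a /\ g ;; f = idm b.

Definition isHopf : Prop :=
  forall a b : C, is_iso (fusion_l a b) /\ is_iso (fusion_r a b).
End MonadAx.

Section LiftAx.
Variables (B : MCMData) (M : MonadData).
Local Notation "! a" := (bob B a) (at level 20, right associativity).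
Local Notation "!h f" := (bhom B f) (at level 20, right associativity).
Local Notation T := (Tob M).
Local Notation Th := (Thom M).

Record ExpLifting := {
  dist : forall a : C, Hom (T (! a)) (! (T a));
  dist_nat : forall a b (f : Hom a b), Th (!h f) ;; dist b = dist a ;; !h (Th f);
  dist_mu : forall a,
      mu M (! a) ;; dist a = Th (dist a) ;; dist (T a) ;; !h (mu M a);
  dist_eta : forall a, eta M (! a) ;; dist a = !h (eta M a);
  dist_delta : forall a,
      Th (delta B a) ;; dist (! a) ;; !h (dist a) = dist a ;; delta B (T a);
  dist_eps : forall a, dist a ;; eps B (T a) = Th (eps B a);
  dist_m : forall a b,
      nn M (! a) (! b) ;; (dist a ⊠ dist b) ;; mm B (T a) (T b)
      = Th (mm B a b) ;; dist (a ⊗ b) ;; !h (nn M a b);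
  dist_mK : nK M ;; mK B = Th (mK B) ;; dist K ;; !h (nK M) }.
End LiftAx.
End SMCAxioms.

Arguments ihom {C V} W _ _ : rename.
Arguments ev {C V} W _ _ : rename.
Arguments cur {C V} W {a b c} _ : rename.
Arguments bob {C V} B _ : rename.
Arguments bhom {C V} B {a b} _ : rename.
Arguments delta {C V} B _ : rename.
Arguments eps {C V} B _ : rename.
Arguments dup {C V} B _ : rename.
Arguments er {C V} B _ : rename.
Arguments mm {C V} B _ _ : rename.
Arguments mK {C V} B : rename.
Arguments Tob {C V} M _ : rename.
Arguments Thom {C V} M {a b} _ : rename.
Arguments mu {C V} M _ : rename.
Arguments eta {C V} M _ : rename.
Arguments nn {C V} M _ _ : rename.
Arguments nK {C V} M : rename.
Arguments dist {C V B M} L _ : rename.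

Record LinearCategory (C : Category) := {
  lc_V : SMCData C;
  lc_V_ax : isSMC lc_V;
  lc_W : ClosedData lc_V;
  lc_W_ax : isClosed lc_W;
  lc_B : MCMData lc_V;
  lc_B_ax : isMCM lc_B }.

Record MELLLiftingMonad (C : Category) (L : LinearCategory C) := {
  ml_M : MonadData (lc_V L);
  ml_M_ax : isSCMonad ml_M;
  ml_hopf : isHopf ml_M;
  ml_lift : ExpLifting (lc_B L) ml_M }.

Section EM.
Context {C : Category} {V : SMCData C} (M : MonadData V) (HM : isSCMonad M).

Record EMob := {
  car : C;
  act : Hom (Tob M car) car;
  act_eta : eta M car ;; act = idm car;
  act_mu : mu M car ;; act = Thom M act ;; act }.

Definition EMhom (x y : EMob) : Type :=
  { f : Hom (car x) (car y) | act x ;; f = Thom M f ;; act y }.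

Definition EMcomp (x y z : EMob) (f : EMhom x y) (g : EMhom y z) : EMhom x z.
Proof.
  exists (proj1_sig f ;; proj1_sig g).
  destruct f as [f Hf], g as [g Hg]; simpl.
  rewrite <- comp_assoc, Hf, comp_assoc, Hg, <- comp_assoc, <- (Thom_comp HM).
  reflexivity.
Defined.

Definition EMid (x : EMob) : EMhom x x.
Proof.
  exists (idm (car x)).
  rewrite (Thom_id HM), comp_idl, comp_idr. reflexivity.
Defined.

Lemma EMhom_eq (x y : EMob) (f g : EMhom x y) : proj1_sig f = proj1_sig g -> f = g.
Proof.
  destruct f as [f Hf], g as [g Hg]; simpl; intros ->.
  f_equal; apply proof_irrelevance.
Qed.

Definition EMcat : Category.
Proof.
  refine (@Build_Category EMob EMhom EMcomp EMid _ _ _).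
  - intros a b f; apply EMhom_eq; simpl; apply comp_idl.
  - intros a b f; apply EMhom_eq; simpl; apply comp_idr.
  - intros a b c d f g h; apply EMhom_eq; simpl; apply comp_assoc.
Defined.

Definition UT {x y : EMcat} (f : Hom x y) : Hom (car x) (car y) := proj1_sig f.
End EM.

Section StrictPres.
Context {C : Category} (L : LinearCategory C) (M : MonadData (lc_V L))
        (HM : isSCMonad M) (LT : LinearCategory (EMcat HM)).
Local Notation V := (lc_V L).
Local Notation W := (lc_W L).
Local Notation B := (lc_B L).
Local Notation VT := (lc_V LT).
Local Notation WT := (lc_W LT).
Local Notation BT := (lc_B LT).

Record EM_linear_strict : Prop := {
  sp_tens_car : forall x y : EMcat HM, car (tens VT x y) = tens V (car x) (car y);
  sp_tens_act : forall x y : EMcat HM,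
      hom_heq (act (tens VT x y)) (nn M (car x) (car y) ;; tensh V (act x) (act y));
  sp_unit_car : car (unitK VT) = unitK V;
  sp_unit_act : hom_heq (act (unitK VT)) (nK M);
  sp_tensh : forall (a b c d : EMcat HM) (f : Hom a b) (g : Hom c d),
      hom_heq (UT (tensh VT f g)) (tensh V (UT f) (UT g));
  sp_alpha : forall a b c : EMcat HM,
      hom_heq (UT (alpha VT a b c)) (alpha V (car a) (car b) (car c));
  sp_alpha_inv : forall a b c : EMcat HM,
      hom_heq (UT (alpha_inv VT a b c)) (alpha_inv V (car a) (car b) (car c));
  sp_lu : forall a : EMcat HM, hom_heq (UT (lu VT a)) (lu V (car a));
  sp_lu_inv : forall a : EMcat HM, hom_heq (UT (lu_inv VT a)) (lu_inv V (car a));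
  sp_ru : forall a : EMcat HM, hom_heq (UT (ru VT a)) (ru V (car a));
  sp_ru_inv : forall a : EMcat HM, hom_heq (UT (ru_inv VT a)) (ru_inv V (car a));
  sp_sym : forall a b : EMcat HM, hom_heq (UT (sym VT a b)) (sym V (car a) (car b));
  sp_ihom : forall a b : EMcat HM, car (ihom WT a b) = ihom W (car a) (car b);
  sp_ev : forall a b : EMcat HM, hom_heq (UT (ev WT a b)) (ev W (car a) (car b));
  sp_cur : forall (a b c : EMcat HM) (f : Hom (tens VT a c) b)
      (g : Hom (tens V (car a) (car c)) (car b)),
      hom_heq (UT f) g -> hom_heq (UT (cur WT f)) (cur W g);
  sp_bob : forall a : EMcat HM, car (bob BT a) = bob B (car a);
  sp_bhom : forall (a b : EMcat HM) (f : Hom a b),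
      hom_heq (UT (bhom BT f)) (bhom B (UT f));
  sp_delta : forall a : EMcat HM, hom_heq (UT (delta BT a)) (delta B (car a));
  sp_eps : forall a : EMcat HM, hom_heq (UT (eps BT a)) (eps B (car a));
  sp_dup : forall a : EMcat HM, hom_heq (UT (dup BT a)) (dup B (car a));
  sp_er : forall a : EMcat HM, hom_heq (UT (er BT a)) (er B (car a));
  sp_mm : forall a b : EMcat HM, hom_heq (UT (mm BT a b)) (mm B (car a) (car b));
  sp_mK : hom_heq (UT (mK BT)) (mK B) }.
End StrictPres.

(* Main.v *)
Require Import Defs.
From Stdlib Require Import ProofIrrelevance Eqdep ClassicalEpsilon.

Ltac ra := repeat rewrite comp_assoc.
Ltac inst0 H := lazymatch type of H with
  | forall x : _, _ => let H' := open_constr:(H _) in inst0 H'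
  | _ => H end.

Lemma postc {C : Category} {a b d : C} {l r : Hom a b} (E : l = r) (k : Hom b d) : l ;; k = r ;; k.
Proof. rewrite E; reflexivity. Qed.
Tactic Notation "rw" uconstr(H) :=
  let H0 := open_constr:(H) in let H' := inst0 H0 in ra;
  first [ rewrite H'
        | let E := fresh "E" in
          epose proof H' as E;
          repeat rewrite comp_assoc in E;
          rewrite E; clear E
        | let E := fresh "E" in
          epose proof (postc H' _) as E;
          repeat rewrite comp_assoc in E;
          rewrite E; clear E ]; ra.
Tactic Notation "rwl" uconstr(H) :=
  let H0 := open_constr:(H) in let H' := inst0 H0 in ra;
  first [ rewrite <- H'
        | let E := fresh "E" in
          epose proof (eq_sym H') as E;
          repeat rewrite comp_assoc in E;
          rewrite E; clear E
        | let E := fresh "E" in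
          epose proof (postc (eq_sym H') _) as E;
          repeat rewrite comp_assoc in E;
          rewrite E; clear E ]; ra.

Lemma cancel_l {C : Category} {a b c : C} (f : Hom a b) (g : Hom b a) (x y : Hom b c) :
  g ;; f = idm b -> f ;; x = f ;; y -> x = y.
Proof. intros H E. rewrite <- (comp_idl x), <- (comp_idl y), <- H, !comp_assoc, E. reflexivity. Qed.
Lemma cancel_r {C : Category} {a b c : C} (f : Hom b c) (g : Hom c b) (x y : Hom a b) :
  f ;; g = idm b -> x ;; f = y ;; f -> x = y.
Proof. intros H E. rewrite <- (comp_idr x), <- (comp_idr y), <- H, <- !comp_assoc, E. reflexivity. Qed.

Section Main.
Context {C : Category} (V : SMCData C) (HV : isSMC V) (M : MonadData V) (HM : isSCMonad M).
Local Notation "a ⊗ b" := (tens V a b) (at level 30, right associativity).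
Local Notation "f ⊠ g" := (tensh V f g) (at level 30, right associativity).
Local Notation K := (unitK V).
Local Notation T := (Tob M).
Local Notation Th := (Thom M).



Lemma tsplit1 {a b c d : C} (f : Hom a b) (g : Hom c d) : f ⊠ g = (f ⊠ idm c) ;; (idm b ⊠ g).
Proof. rewrite <- (tensh_comp HV), comp_idl, comp_idr. reflexivity. Qed.
Lemma tsplit2 {a b c d : C} (f : Hom a b) (g : Hom c d) : f ⊠ g = (idm a ⊠ g) ;; (f ⊠ idm d).
Proof. rewrite <- (tensh_comp HV), comp_idl, comp_idr. reflexivity. Qed.
Lemma tcompl {a b c d : C} (f : Hom a b) (g : Hom b c) : (f ;; g) ⊠ idm d = (f ⊠ idm d) ;; (g ⊠ idm d).
Proof. rewrite <- (tensh_comp HV), comp_idl. reflexivity. Qed.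
Lemma tcompr {a b c d : C} (f : Hom a b) (g : Hom b c) : idm d ⊠ (f ;; g) = (idm d ⊠ f) ;; (idm d ⊠ g).
Proof. rewrite <- (tensh_comp HV), comp_idl. reflexivity. Qed.
Lemma tmerge {a b c a' b' c' : C} (f : Hom a b) (g : Hom b c) (f' : Hom a' b') (g' : Hom b' c') :
  (f ⊠ f') ;; (g ⊠ g') = (f ;; g) ⊠ (f' ;; g').
Proof. rewrite (tensh_comp HV). reflexivity. Qed.

Lemma tcl {a b c d e : C} (f : Hom a b) (g : Hom b c) (h : Hom d e) : (f ;; g) ⊠ h = (f ⊠ idm d) ;; (g ⊠ h).
Proof. rewrite <- (tensh_comp HV), comp_idl. reflexivity. Qed.
Lemma tcr {a b c d e : C} (f : Hom a b) (g : Hom b c) (h : Hom d e) : h ⊠ (f ;; g) = (idm d ⊠ f) ;; (h ⊠ g).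
Proof. rewrite <- (tensh_comp HV), comp_idl. reflexivity. Qed.

Lemma alpha_inv_nat a b c a' b' c' (f : Hom a a') (g : Hom b b') (h : Hom c c') :
  (f ⊠ (g ⊠ h)) ;; alpha_inv V a' b' c' = alpha_inv V a b c ;; ((f ⊠ g) ⊠ h).
Proof.
  apply (cancel_r (alpha V a' b' c') (alpha_inv V a' b' c')). apply (alpha_iso1 HV).
  ra. rewrite (alpha_iso2 HV), comp_idr. rewrite (alpha_nat HV).
  rw (alpha_iso2 HV). rewrite comp_idl. reflexivity.
Qed.

Lemma lu_cancel {a b : C} (f g : Hom a b) : idm K ⊠ f = idm K ⊠ g -> f = g.
Proof.
  intros E. apply (cancel_l (lu V a) (lu_inv V a)). apply (lu_iso2 HV).
  rewrite <- !(lu_nat HV), E. reflexivity.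
Qed.
Lemma ru_cancel {a b : C} (f g : Hom a b) : f ⊠ idm K = g ⊠ idm K -> f = g.
Proof.
  intros E. apply (cancel_l (ru V a) (ru_inv V a)). apply (ru_iso2 HV).
  rewrite <- !(ru_nat HV), E. reflexivity.
Qed.

Lemma kelly1 a b : alpha V K a b ;; lu V (a ⊗ b) = lu V a ⊠ idm b.
Proof.
  apply lu_cancel.
  apply (cancel_l (alpha V K (K ⊗ a) b) (alpha_inv V K (K ⊗ a) b)). apply (alpha_iso2 HV).
  apply (cancel_l (alpha V K K a ⊠ idm b) (alpha_inv V K K a ⊠ idm b)).
  { rewrite tmerge, (alpha_iso2 HV), comp_idl. apply (tensh_id HV). }
  rewrite <- !comp_assoc.
  rewrite tcompr. rewrite <- (comp_assoc _ (idm K ⊠ alpha V K a b)).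
  rewrite !comp_assoc. rewrite <- (comp_assoc (alpha V K K a ⊠ idm b)).
  rewrite <- (comp_assoc _ (idm K ⊠ alpha V K a b)).
  rewrite <- (pentagon HV). ra. rewrite (triangle HV).
  rewrite <- (tensh_id HV a b), <- (alpha_nat HV).
  rewrite <- (triangle HV). rewrite tcompl. ra. rewrite (alpha_nat HV). reflexivity.
Qed.

Lemma kelly2 a b : alpha V a b K ;; (idm a ⊠ ru V b) = ru V (a ⊗ b).
Proof.
  apply ru_cancel.
  apply (cancel_r (alpha V a b K) (alpha_inv V a b K)). apply (alpha_iso1 HV).
  rewrite tcompl. ra. rewrite (alpha_nat HV).
  rewrite <- (triangle HV b K), tcompr.
  rewrite <- !comp_assoc. rewrite <- (pentagon HV). ra.
  rewrite <- (triangle HV (a ⊗ b) K). ra.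
  rewrite <- (tensh_id HV a b), (alpha_nat HV). reflexivity.
Qed.

Lemma kelly1' a b : alpha_inv V K a b ;; (lu V a ⊠ idm b) = lu V (a ⊗ b).
Proof. rewrite <- kelly1. rw (alpha_iso2 HV). apply comp_idl. Qed.
Lemma kelly2' a b : alpha_inv V a b K ;; ru V (a ⊗ b) = idm a ⊠ ru V b.
Proof. rewrite <- kelly2. rw (alpha_iso2 HV). apply comp_idl. Qed.

Lemma tslide {a b c d d' e : C} (f : Hom a b) {g : Hom c d} {h : Hom d e} {h' : Hom c d'} {g' : Hom d' e} :
  g ;; h = h' ;; g' -> (f ⊠ g) ;; (idm b ⊠ h) = (idm a ⊠ h') ;; (f ⊠ g').
Proof. intros E. rewrite !tmerge, comp_idl, comp_idr, E. reflexivity. Qed.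

Lemma sym_nat1 {a b c a' b' c' : C} (f : Hom a a') (g : Hom b b') (h : Hom c c') :
  ((f ⊠ g) ⊠ h) ;; (sym V a' b' ⊠ idm c') = (sym V a b ⊠ idm c) ;; ((g ⊠ f) ⊠ h).
Proof. rewrite !tmerge, comp_idl, comp_idr, (sym_nat HV). reflexivity. Qed.

Lemma inter_nat {w x y z w' x' y' z' : C} (f1 : Hom w w') (f2 : Hom x x') (f3 : Hom y y') (f4 : Hom z z') :
  ((f1 ⊠ f2) ⊠ (f3 ⊠ f4)) ;; interchange V w' x' y' z' = interchange V w x y z ;; ((f1 ⊠ f3) ⊠ (f2 ⊠ f4)).
Proof.
  unfold interchange. ra. rw (alpha_nat HV).
  rw (tslide f1 (alpha_inv_nat _ _ _ _ _ _ f2 f3 f4)).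
  rw (tslide f1 (sym_nat1 f2 f3 f4)).
  rw (tslide f1 (alpha_nat HV f3 f2 f4)).
  rw alpha_inv_nat. reflexivity.
Qed.


Lemma inter_unit x y :
  interchange V K x y K ;; (lu V y ⊠ ru V x) = (lu V x ⊠ ru V y) ;; sym V x y.
Proof.
  unfold interchange. ra. rewrite (tsplit1 (lu V y)). rw kelly1'.
  rw (lu_nat HV). rw (lu_nat HV). rw (lu_nat HV).
  rw kelly1. rw kelly2. rw (ru_nat HV). rw kelly2'.
  rewrite (tsplit1 (lu V x) (ru V y)). ra. reflexivity.
Qed.

Lemma Th_id1 {a b : C} (f : Hom a b) : Th (idm a) ;; Th f = Th f.
Proof. rewrite (Thom_id HM). apply comp_idl. Qed.

Lemma em_iso (x y : EMob M) (f : Hom (car x) (car y)) (g : Hom (car y) (car x)) :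
  act x ;; f = Th f ;; act y -> f ;; g = idm _ -> g ;; f = idm _ ->
  act y ;; g = Th g ;; act x.
Proof.
  intros Hf H1 H2.
  rewrite <- (comp_idl (act y)). rewrite <- (Thom_id HM), <- H2, (Thom_comp HM). ra.
  rw (eq_sym Hf). rewrite H1, comp_idr. reflexivity.
Qed.

Lemma tens_eta (x y : EMob M) : eta M (car x ⊗ car y) ;; (nn M _ _ ;; (act x ⊠ act y)) = idm _.
Proof. rw (eta_nn HM). rewrite tmerge, !act_eta. apply (tensh_id HV). Qed.

Lemma tens_mu (x y : EMob M) :
  mu M (car x ⊗ car y) ;; (nn M _ _ ;; (act x ⊠ act y)) =
  Th (nn M _ _ ;; (act x ⊠ act y)) ;; (nn M _ _ ;; (act x ⊠ act y)).
Proof.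
  rw (mu_nn HM). rewrite tmerge, !act_mu, (tensh_comp HV).
  rewrite (Thom_comp HM). ra. rwl (nn_nat HM). reflexivity.
Qed.

Definition tens_ob (x y : EMob M) : EMob M :=
  {| car := car x ⊗ car y; act := nn M _ _ ;; (act x ⊠ act y);
     act_eta := tens_eta x y; act_mu := tens_mu x y |}.

Definition unit_ob : EMob M :=
  {| car := K; act := nK M; act_eta := eta_nK HM; act_mu := mu_nK HM |}.

Local Notation EC := (EMcat HM).

Lemma tensh_em_ax {a b c d : EMob M} (f : EMhom a b) (g : EMhom c d) :
  act (tens_ob a c) ;; (proj1_sig f ⊠ proj1_sig g) = Th (proj1_sig f ⊠ proj1_sig g) ;; act (tens_ob b d).
Proof.
  destruct f as [f Hf], g as [g Hg]; simpl. ra.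
  rewrite tmerge, Hf, Hg, (tensh_comp HV). rwl (nn_nat HM). reflexivity.
Qed.
Definition tensh_em {a b c d : EC} (f : Hom a b) (g : Hom c d) : @Hom EC (tens_ob a c) (tens_ob b d) :=
  exist _ _ (tensh_em_ax f g).

Lemma alpha_em_ax (a b c : EMob M) :
  act (tens_ob (tens_ob a b) c) ;; alpha V (car a) (car b) (car c) =
  Th (alpha V (car a) (car b) (car c)) ;; act (tens_ob a (tens_ob b c)).
Proof.
  simpl. ra. rewrite tcl. ra. rw (alpha_nat HV). rewrite tcr.
  rw (nn_assoc HM). reflexivity.
Qed.
Definition alpha_em (a b c : EC) : @Hom EC (tens_ob (tens_ob a b) c) (tens_ob a (tens_ob b c)) :=
  exist _ _ (alpha_em_ax a b c).
Definition alpha_inv_em (a b c : EC) : @Hom EC (tens_ob a (tens_ob b c)) (tens_ob (tens_ob a b) c) :=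
  exist _ _ (em_iso (tens_ob (tens_ob a b) c) (tens_ob a (tens_ob b c)) _ _ (alpha_em_ax a b c) (alpha_iso1 HV _ _ _) (alpha_iso2 HV _ _ _)).

Lemma lu_em_ax (a : EMob M) :
  act (tens_ob unit_ob a) ;; lu V (car a) = Th (lu V (car a)) ;; act a.
Proof.
  simpl. ra. rewrite (tsplit1 (nK M)). ra. rw (lu_nat HV). rw (nn_lunit HM). reflexivity.
Qed.
Definition lu_em (a : EC) : @Hom EC (tens_ob unit_ob a) a := exist _ _ (lu_em_ax a).
Definition lu_inv_em (a : EC) : @Hom EC a (tens_ob unit_ob a) :=
  exist _ _ (em_iso (tens_ob unit_ob a) a _ _ (lu_em_ax a) (lu_iso1 HV _) (lu_iso2 HV _)).

Lemma ru_em_ax (a : EMob M) :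
  act (tens_ob a unit_ob) ;; ru V (car a) = Th (ru V (car a)) ;; act a.
Proof.
  simpl. ra. rewrite (tsplit2 _ (nK M)). ra. rw (ru_nat HV). rw (nn_runit HM). reflexivity.
Qed.
Definition ru_em (a : EC) : @Hom EC (tens_ob a unit_ob) a := exist _ _ (ru_em_ax a).
Definition ru_inv_em (a : EC) : @Hom EC a (tens_ob a unit_ob) :=
  exist _ _ (em_iso (tens_ob a unit_ob) a _ _ (ru_em_ax a) (ru_iso1 HV _) (ru_iso2 HV _)).

Lemma sym_em_ax (a b : EMob M) :
  act (tens_ob a b) ;; sym V (car a) (car b) = Th (sym V (car a) (car b)) ;; act (tens_ob b a).
Proof.
  simpl. ra. rw (sym_nat HV). rw (nn_sym HM). reflexivity.
Qed.
Definition sym_em (a b : EC) : @Hom EC (tens_ob a b) (tens_ob b a) := exist _ _ (sym_em_ax a b).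

Definition VT : SMCData EC :=
  @Build_SMCData EC tens_ob (@tensh_em) unit_ob alpha_em alpha_inv_em lu_em lu_inv_em
     ru_em ru_inv_em sym_em.

Lemma HVT : isSMC VT.
Proof.
  constructor; intros; apply EMhom_eq; simpl.
  all: first [ apply (tensh_id HV) | apply (tensh_comp HV) | apply (alpha_nat HV)
             | apply (alpha_iso1 HV) | apply (alpha_iso2 HV) | apply (lu_nat HV)
             | apply (lu_iso1 HV) | apply (lu_iso2 HV) | apply (ru_nat HV)
             | apply (ru_iso1 HV) | apply (ru_iso2 HV) | apply (sym_nat HV)
             | apply (sym_invol HV) | apply (pentagon HV) | apply (triangle HV)
             | apply (hexagon HV) ].
Qed.


Context (Hopf : isHopf M).
Local Notation η := (eta M).
Local Notation μ := (mu M).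
Local Notation n := (nn M).

Definition Hinv (a b : C) : Hom (T a ⊗ T b) (T (T a ⊗ b)) :=
  proj1_sig (constructive_indefinite_description _ (proj2 (Hopf a b))).
Lemma Hinv_1 a b : fusion_r M a b ;; Hinv a b = idm _.
Proof. unfold Hinv. destruct (constructive_indefinite_description _ _) as [g [H1 H2]]. exact H1. Qed.
Lemma Hinv_2 a b : Hinv a b ;; fusion_r M a b = idm _.
Proof. unfold Hinv. destruct (constructive_indefinite_description _ _) as [g [H1 H2]]. exact H2. Qed.

Lemma Hinv_2' a b : Hinv a b ;; (n (T a) b ;; (μ a ⊠ idm (T b))) = idm _.
Proof. exact (Hinv_2 a b). Qed.

Lemma nn_nat_l {a b a' : C} (f : Hom a a') : n a b ;; (Th f ⊠ idm (T b)) = Th (f ⊠ idm b) ;; n a' b.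
Proof. rewrite (nn_nat HM), (Thom_id HM). reflexivity. Qed.
Lemma nn_nat_r {a b b' : C} (g : Hom b b') : n a b ;; (idm (T a) ⊠ Th g) = Th (idm a ⊠ g) ;; n a b'.
Proof. rewrite (nn_nat HM), (Thom_id HM). reflexivity. Qed.

Lemma fr_nat {a b a' b' : C} (u : Hom a a') (v : Hom b b') :
  Th (Th u ⊠ v) ;; fusion_r M a' b' = fusion_r M a b ;; (Th u ⊠ Th v).
Proof.
  unfold fusion_r. rw (nn_nat HM). rewrite !tmerge, (mu_nat HM), comp_idl, comp_idr. reflexivity.
Qed.
Lemma Hinv_nat {a b a' b' : C} (u : Hom a a') (v : Hom b b') :
  (Th u ⊠ Th v) ;; Hinv a' b' = Hinv a b ;; Th (Th u ⊠ v).
Proof.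
  apply (cancel_r (fusion_r M a' b') (Hinv a' b')). apply Hinv_1.
  ra. rewrite Hinv_2, comp_idr. rewrite fr_nat. rw Hinv_2. rewrite comp_idl. reflexivity.
Qed.
Lemma Hinv_nat_l {a b a' : C} (u : Hom a a') :
  (Th u ⊠ idm (T b)) ;; Hinv a' b = Hinv a b ;; Th (Th u ⊠ idm b).
Proof. rewrite <- Hinv_nat, (Thom_id HM). reflexivity. Qed.
Lemma Hinv_nat_r {a b b' : C} (v : Hom b b') :
  (idm (T a) ⊠ Th v) ;; Hinv a b' = Hinv a b ;; Th (idm (T a) ⊠ v).
Proof. rewrite <- (Thom_id HM a), Hinv_nat, (Thom_id HM). reflexivity. Qed.

Lemma F3 a b : Th (η a ⊠ idm b) ;; fusion_r M a b = n a b.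
Proof.
  unfold fusion_r. rw (nn_nat HM). rewrite tmerge, (mu_eta_r HM), (Thom_id HM), comp_idl, (tensh_id HV).
  apply comp_idr.
Qed.
Lemma F4 a b : η (T a ⊗ b) ;; fusion_r M a b = idm (T a) ⊠ η b.
Proof.
  unfold fusion_r. rw (eta_nn HM). rewrite tmerge, (mu_eta_l HM), comp_idr. reflexivity.
Qed.
Lemma F4' a b : (idm (T a) ⊠ η b) ;; Hinv a b = η (T a ⊗ b).
Proof. rewrite <- F4. rw Hinv_1. apply comp_idr. Qed.

Lemma swap_t {a b c d : C} (f : Hom a b) (g : Hom c d) : (idm a ⊠ g) ;; (f ⊠ idm d) = (f ⊠ idm c) ;; (idm b ⊠ g).
Proof. rewrite !tmerge, !comp_idl, !comp_idr. reflexivity. Qed.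

Section Alg.
Variable x : EMob M.
Local Notation A := (car x).
Local Notation a := (act x).

Definition Phi (Y : C) : Hom (T (A ⊗ Y)) (A ⊗ T Y) := n A Y ;; (a ⊠ idm (T Y)).
Definition Psi (Y : C) : Hom (A ⊗ T Y) (T (A ⊗ Y)) :=
  (η A ⊠ idm (T Y)) ;; Hinv A Y ;; Th (a ⊠ idm Y).

Lemma Psi_Phi Y : Psi Y ;; Phi Y = idm _.
Proof.
  unfold Psi, Phi. ra. rw (nn_nat HM). rewrite (Thom_id HM), tmerge, comp_idl.
  rewrite <- (act_mu x), (tcompl (μ A)).
  rw Hinv_2'. rewrite comp_idl.
  rewrite tmerge, (act_eta x), comp_idl. apply (tensh_id HV).
Qed.

Lemma P3 (b : C) : n A b ;; (η (T A) ⊠ idm (T b)) ;; Hinv (T A) b ;; Th (μ A ⊠ idm b) = Th (η A ⊠ idm b).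
Proof.
  apply (cancel_r (fusion_r M A b) (Hinv A b)). apply Hinv_1.
  rewrite F3. unfold fusion_r. ra. rw (nn_nat HM). rewrite tmerge, (Thom_id HM), comp_idl.
  rewrite <- (mu_assoc HM), tcompl.
  rw Hinv_2'. rewrite comp_idl. rewrite tmerge, (mu_eta_l HM), comp_idl, (tensh_id HV). apply comp_idr.
Qed.

Lemma Phi_Psi Y : Phi Y ;; Psi Y = idm _.
Proof.
  unfold Phi, Psi. ra. rw (@tmerge). rewrite comp_idl, (eta_nat HM), tcompl. ra.
  rw (@Hinv_nat_l). rwl (Thom_comp HM). rewrite tmerge, comp_idl, <- (act_mu x), tcompl, (Thom_comp HM).
  rw P3.
  rewrite <- (Thom_comp HM), tmerge, (act_eta x), comp_idl, (tensh_id HV). apply (Thom_id HM).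
Qed.

Lemma Psi_nat {Y Y' : C} (g : Hom Y Y') : (idm A ⊠ Th g) ;; Psi Y' = Psi Y ;; Th (idm A ⊠ g).
Proof.
  unfold Psi. ra. rw (@swap_t). rw (@Hinv_nat_r). rwl (Thom_comp HM). rewrite swap_t.
  rewrite (Thom_comp HM). reflexivity.
Qed.

Lemma Phi_mu Y : μ (A ⊗ Y) ;; Phi Y = Th (Phi Y) ;; n A (T Y) ;; (a ⊠ μ Y).
Proof.
  unfold Phi. ra. rw (mu_nn HM). rw (@tmerge). rewrite comp_idr, (act_mu x).
  rewrite (Thom_comp HM). ra. rwl (@nn_nat_l). rw (@tmerge). rewrite comp_idl. reflexivity.
Qed.

Lemma P6 Y : (idm A ⊠ μ Y) ;; Psi Y = Psi (T Y) ;; Th (Psi Y) ;; μ (A ⊗ Y).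
Proof.
  apply (cancel_l (Phi (T Y)) (Psi (T Y))). apply Psi_Phi.
  apply (cancel_r (Phi Y) (Psi Y)). apply Phi_Psi.
  ra. rw Psi_Phi. rewrite comp_idr. rw Phi_Psi. rewrite comp_idl.
  rw Phi_mu. rwl (Thom_comp HM). rewrite Psi_Phi, (Thom_id HM), comp_idl.
  unfold Phi. ra. rw (@tmerge). rewrite ?comp_idl, ?comp_idr. reflexivity.
Qed.
End Alg.

Lemma Phi_Psi' (x : EMob M) Y : n (car x) Y ;; ((act x ⊠ idm (T Y)) ;; Psi x Y) = idm _.
Proof. rewrite <- comp_assoc. apply Phi_Psi. Qed.
Lemma Psi_Phi' (x : EMob M) Y : Psi x Y ;; (n (car x) Y ;; (act x ⊠ idm (T Y))) = idm _.
Proof. apply Psi_Phi. Qed.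

Context (W : ClosedData V) (HW : isClosed W).

Lemma cur_inj {a b c : C} (g1 g2 : Hom c (ihom W a b)) :
  (idm a ⊠ g1) ;; ev W a b = (idm a ⊠ g2) ;; ev W a b -> g1 = g2.
Proof. intros E. rewrite <- (cur_eta HW g1), <- (cur_eta HW g2), E. reflexivity. Qed.

Definition kap (x y : EMob M) : Hom (T (ihom W (car x) (car y))) (ihom W (car x) (car y)) :=
  cur W (Psi x _ ;; Th (ev W _ _) ;; act y).

Lemma kap_beta (x y : EMob M) :
  (idm (car x) ⊠ kap x y) ;; ev W _ _ = Psi x _ ;; (Th (ev W _ _) ;; act y).
Proof. unfold kap. rewrite (cur_beta HW). ra. reflexivity. Qed.

Lemma kap_eta (x y : EMob M) : η _ ;; kap x y = idm _.
Proof.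
  apply cur_inj. rewrite tcompr. rw kap_beta. unfold Psi. ra. rw (@swap_t). rw F4'.
  rw (eta_nat HM). rwl (Thom_comp HM). rewrite tmerge, (act_eta x), comp_idl, (tensh_id HV), (Thom_id HM), comp_idl.
  rwl (eta_nat HM). rewrite (act_eta y), comp_idr, comp_idl. reflexivity.
Qed.

Lemma kap_mu (x y : EMob M) : μ _ ;; kap x y = Th (kap x y) ;; kap x y.
Proof.
  apply cur_inj. rewrite !tcompr. rw kap_beta. rw P6.
  rw (@Psi_nat). rwl (Thom_comp HM). rewrite kap_beta. rewrite !(Thom_comp HM). ra.
  rwl (act_mu y). rw (mu_nat HM). reflexivity.
Qed.

Definition ihom_ob (x y : EMob M) : EMob M :=
  {| car := ihom W (car x) (car y); act := kap x y; act_eta := kap_eta x y; act_mu := kap_mu x y |}.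

Lemma ev_em (x y : EMob M) :
  act (tens_ob x (ihom_ob x y)) ;; ev W (car x) (car y) = Th (ev W (car x) (car y)) ;; act y.
Proof.
  simpl. rewrite (tsplit1 (act x)). ra. rw kap_beta. rw Phi_Psi'. rewrite comp_idl. reflexivity.
Qed.

Lemma cur_em (x y z : EMob M) (f : EMhom (tens_ob x z) y) :
  act z ;; cur W (proj1_sig f) = Th (cur W (proj1_sig f)) ;; act (ihom_ob x y).
Proof.
  destruct f as [f Hf]. simpl in *. apply cur_inj.
  rewrite !tcompr. ra. rewrite (cur_beta HW). rw kap_beta. rw (@Psi_nat).
  rwl (Thom_comp HM). rewrite (cur_beta HW). rwl Hf. rewrite (tsplit1 (act x)). ra.
  rw Psi_Phi'. rewrite comp_idl. reflexivity.
Qed.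

Definition WT : ClosedData VT :=
  @Build_ClosedData EC VT ihom_ob
    (fun a b => exist _ (ev W (car a) (car b)) (ev_em a b))
    (fun a b c f => exist _ (cur W (proj1_sig f)) (cur_em a b c f)).

Lemma HWT : isClosed WT.
Proof.
  constructor; intros; apply EMhom_eq; simpl.
  - apply (cur_beta HW).
  - apply (cur_eta HW).
Qed.

Context (Bm : MCMData V) (HB : isMCM Bm) (Lm : ExpLifting Bm M).
Local Notation bo := (bob Bm).
Local Notation bh := (bhom Bm).
Local Notation δ := (delta Bm).
Local Notation ε := (eps Bm).
Local Notation Δ := (dup Bm).
Local Notation e := (er Bm).
Local Notation m := (mm Bm).
Local Notation mk := (mK Bm).
Local Notation λ := (dist Lm).

Lemma E_unique (Z : C) (ζ : Hom Z (bo Z)) (h : Hom Z K) : ζ ;; bh h = h ;; mk -> h = ζ ;; e Z.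
Proof. intros H. rewrite <- (er_nat HB h). rw H. rewrite (er_mK HB). symmetry. apply comp_idr. Qed.

Lemma LE (A : C) : λ A ;; e (T A) = Th (e A) ;; nK M.
Proof.
  transitivity ((Th (δ A) ;; λ (bo A)) ;; e (T (bo A))).
  - apply E_unique. rewrite (bhom_comp HB). ra. rw (dist_delta Lm). rw (er_coalg HB). reflexivity.
  - symmetry. apply E_unique. rewrite (bhom_comp HB). ra. rw (dist_mK Lm). rwl (Thom_comp HM).
    rewrite <- (er_coalg HB), (Thom_comp HM). ra. rw (dist_nat Lm). reflexivity.
Qed.

Definition pi1 (P Q : C) : Hom (bo P ⊗ bo Q) (bo P) := (idm (bo P) ⊠ e Q) ;; ru V (bo P).
Definition pi2 (P Q : C) : Hom (bo P ⊗ bo Q) (bo Q) := (e P ⊠ idm (bo Q)) ;; lu V (bo Q).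

Lemma eps_m_pre a b {d} (k : Hom (a ⊗ b) d) : m a b ;; (ε (a ⊗ b) ;; k) = (ε a ⊠ ε b) ;; k.
Proof. rw (eps_m HB). reflexivity. Qed.
Lemma dde P : δ P ;; (Δ (bo P) ;; (ε (bo P) ⊠ ε (bo P))) = Δ P.
Proof. rw (delta_dup HB). rewrite tmerge, (comonad_counit_l HB), (tensh_id HV). apply comp_idr. Qed.
Lemma dup_el P : Δ P ;; (e P ⊠ idm (bo P)) = lu_inv V (bo P).
Proof.
  apply (cancel_r (lu V (bo P)) (lu_inv V (bo P))). apply (lu_iso1 HV).
  rewrite (lu_iso2 HV). apply (dup_counit_l HB).
Qed.
Lemma dup_er P : Δ P ;; (idm (bo P) ⊠ e P) = ru_inv V (bo P).
Proof.
  apply (cancel_r (ru V (bo P)) (ru_inv V (bo P))). apply (ru_iso1 HV).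
  rewrite (ru_iso2 HV). apply (dup_counit_r HB).
Qed.

Lemma D_unique (Z P Q : C) (ζ : Hom Z (bo Z)) (h : Hom Z (bo P ⊗ bo Q)) :
  ζ ;; bh h = h ;; ((δ P ⊠ δ Q) ;; m (bo P) (bo Q)) ->
  h = ζ ;; (Δ Z ;; ((bh h ;; (ε _ ;; pi2 P Q)) ⊠ (bh h ;; (ε _ ;; pi1 P Q)) ;; sym V (bo Q) (bo P))).
Proof.
  intros H. symmetry. rewrite (tensh_comp HV (bh h) _ (bh h) _). ra.
  rwl (dup_nat HB). rw H. rw (dup_m HB). rw (@tmerge _ _ _ _ _ _ (m (bo P) (bo Q))). rewrite !eps_m_pre.
  rewrite (tensh_comp HV (ε _ ⊠ ε _)). ra. rwl (@inter_nat).
  rw (@tmerge). rw (@tmerge). ra. rewrite !dde.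
  unfold pi1, pi2. rewrite (tensh_comp HV). ra. rwl (@inter_nat). rw (@tmerge).
  rewrite dup_el, dup_er. rw inter_unit. rw (@tmerge). rewrite (lu_iso2 HV), (ru_iso2 HV), (tensh_id HV), comp_idl.
  rewrite (sym_invol HV). apply comp_idr.
Qed.

Lemma dist_delta' A : Th (δ A) ;; (λ (bo A) ;; bh (λ A)) = λ A ;; δ (T A).
Proof. rewrite <- comp_assoc. apply (dist_delta Lm). Qed.
Lemma eps_nat_pre {a b d : C} (f : Hom a b) (k : Hom b d) : bh f ;; (ε b ;; k) = ε a ;; (f ;; k).
Proof. rw (eps_nat HB). reflexivity. Qed.

Lemma LD1 A : λ A ;; (Δ (T A) ;; pi1 (T A) (T A)) = Th (Δ A) ;; (n _ _ ;; ((λ A ⊠ λ A) ;; pi1 (T A) (T A))).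
Proof.
  unfold pi1. rw (dup_counit_r HB). rw (@tmerge). rewrite comp_idr, LE, (tsplit2 (λ A)). ra.
  rw (ru_nat HV). rewrite tcompr. ra. rw (@nn_nat_r). rw (nn_runit HM).
  rwl (Thom_comp HM). rwl (Thom_comp HM). rw (dup_counit_r HB). rewrite (Thom_id HM). symmetry. apply comp_idl.
Qed.
Lemma LD2 A : λ A ;; (Δ (T A) ;; pi2 (T A) (T A)) = Th (Δ A) ;; (n _ _ ;; ((λ A ⊠ λ A) ;; pi2 (T A) (T A))).
Proof.
  unfold pi2. rw (dup_counit_l HB). rw (@tmerge). rewrite comp_idr, LE, (tsplit1 _ (λ A)). ra.
  rw (lu_nat HV). rewrite tcompl. ra. rw (@nn_nat_l). rw (nn_lunit HM).
  rwl (Thom_comp HM). rwl (Thom_comp HM). rw (dup_counit_l HB). rewrite (Thom_id HM). symmetry. apply comp_idl.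
Qed.

Lemma LD A : λ A ;; Δ (T A) = Th (Δ A) ;; (n _ _ ;; (λ A ⊠ λ A)).
Proof.
  assert (H1 : (Th (δ A) ;; λ (bo A)) ;; bh (λ A ;; Δ (T A)) =
               (λ A ;; Δ (T A)) ;; ((δ (T A) ⊠ δ (T A)) ;; m (bo (T A)) (bo (T A)))).
  { rewrite (bhom_comp HB). ra. rw (dist_delta Lm). rw (dup_coalg HB). reflexivity. }
  assert (H2 : (Th (δ A) ;; λ (bo A)) ;; bh (Th (Δ A) ;; (n _ _ ;; (λ A ⊠ λ A))) =
               (Th (Δ A) ;; (n _ _ ;; (λ A ⊠ λ A))) ;; ((δ (T A) ⊠ δ (T A)) ;; m (bo (T A)) (bo (T A)))).
  { rewrite !(bhom_comp HB). ra. rwl (dist_nat Lm). rwl (Thom_comp HM). rewrite (dup_coalg HB).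
    rewrite !(Thom_comp HM). ra. rwl (dist_m Lm). rwl (m_nat HB). rw (nn_nat HM).
    rw (@tmerge). rw (@tmerge). ra. rewrite !dist_delta'. rewrite (tensh_comp HV). ra. reflexivity. }
  etransitivity. apply (D_unique _ _ _ _ _ H1).
  etransitivity. 2: symmetry; apply (D_unique _ _ _ _ _ H2).
  rewrite !eps_nat_pre. ra. rewrite LD1, LD2. reflexivity.
Qed.

Lemma bang_eta (x : EMob M) : η (bo (car x)) ;; (λ (car x) ;; bh (act x)) = idm _.
Proof. rw (dist_eta Lm). rewrite <- (bhom_comp HB), (act_eta x). apply (bhom_id HB). Qed.
Lemma bang_mu (x : EMob M) :
  μ (bo (car x)) ;; (λ (car x) ;; bh (act x)) = Th (λ (car x) ;; bh (act x)) ;; (λ (car x) ;; bh (act x)).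
Proof.
  rw (dist_mu Lm). rwl (bhom_comp HB). rewrite (act_mu x), (bhom_comp HB), (Thom_comp HM). ra.
  rwl (dist_nat Lm). reflexivity.
Qed.
Definition bang_ob (x : EMob M) : EMob M :=
  {| car := bo (car x); act := λ (car x) ;; bh (act x); act_eta := bang_eta x; act_mu := bang_mu x |}.

Lemma bhom_em (x y : EMob M) (f : EMhom x y) :
  act (bang_ob x) ;; bh (proj1_sig f) = Th (bh (proj1_sig f)) ;; act (bang_ob y).
Proof.
  destruct f as [f Hf]; simpl. ra. rwl (bhom_comp HB). rewrite Hf, (bhom_comp HB). rwl (dist_nat Lm). reflexivity.
Qed.
Lemma delta_em (x : EMob M) : act (bang_ob x) ;; δ (car x) = Th (δ (car x)) ;; act (bang_ob (bang_ob x)).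
Proof. simpl. ra. rw (delta_nat HB). rwl (dist_delta Lm). rewrite (bhom_comp HB). reflexivity. Qed.
Lemma eps_em (x : EMob M) : act (bang_ob x) ;; ε (car x) = Th (ε (car x)) ;; act x.
Proof. simpl. ra. rw (eps_nat HB). rw (dist_eps Lm). reflexivity. Qed.
Lemma mm_em (x y : EMob M) :
  act (tens_ob (bang_ob x) (bang_ob y)) ;; m (car x) (car y) = Th (m (car x) (car y)) ;; act (bang_ob (tens_ob x y)).
Proof.
  simpl. ra. rewrite (tensh_comp HV). ra. rw (m_nat HB). rw (dist_m Lm). rewrite (bhom_comp HB). reflexivity.
Qed.
Lemma mK_em : act unit_ob ;; mk = Th mk ;; act (bang_ob unit_ob).
Proof. simpl. rw (dist_mK Lm). reflexivity. Qed.
Lemma er_em (x : EMob M) : act (bang_ob x) ;; e (car x) = Th (e (car x)) ;; act unit_ob.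
Proof. simpl. ra. rw (er_nat HB). apply LE. Qed.
Lemma dup_em (x : EMob M) :
  act (bang_ob x) ;; Δ (car x) = Th (Δ (car x)) ;; act (tens_ob (bang_ob x) (bang_ob x)).
Proof. simpl. ra. rw (dup_nat HB). rw LD. rewrite (tensh_comp HV). reflexivity. Qed.

Definition BT : MCMData VT :=
  @Build_MCMData EC VT bang_ob
    (fun x y f => exist _ (bh (proj1_sig f)) (bhom_em x y f))
    (fun x => exist _ (δ (car x)) (delta_em x))
    (fun x => exist _ (ε (car x)) (eps_em x))
    (fun x => exist _ (Δ (car x)) (dup_em x))
    (fun x => exist _ (e (car x)) (er_em x))
    (fun x y => exist _ (m (car x) (car y)) (mm_em x y))
    (exist _ mk mK_em).

Lemma HBT : isMCM BT.
Proof.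
  constructor; intros; apply EMhom_eq; try unfold interchange; simpl.
  all: try first [ apply (bhom_id HB) | apply (bhom_comp HB) | apply (delta_nat HB) | apply (eps_nat HB)
    | apply (comonad_counit_l HB) | apply (comonad_counit_r HB) | apply (comonad_coassoc HB)
    | apply (m_nat HB) | apply (m_assoc HB) | apply (m_lunit HB) | apply (m_runit HB) | apply (m_sym HB)
    | apply (delta_m HB) | apply (delta_mK HB) | apply (eps_m HB) | apply (eps_mK HB)
    | apply (dup_nat HB) | apply (er_nat HB) | apply (dup_coassoc HB) | apply (dup_counit_l HB)
    | apply (dup_counit_r HB) | apply (dup_cocomm HB) | apply (delta_dup HB) | apply (delta_er HB)
    | apply (dup_m HB) | apply (er_m HB) | apply (er_mK HB) | apply (dup_coalg HB) | apply (dup_mK HB) | apply (er_coalg HB) ].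
Qed.
End Main.


Theorem theorem6p12 (C : Category) (L : LinearCategory C)
  (ML : MELLLiftingMonad L) :
  exists LT : LinearCategory (EMcat (ml_M_ax ML)),
    EM_linear_strict LT.
Proof.
  set (V := lc_V L). set (HV := lc_V_ax L). set (M := ml_M ML). set (HM := ml_M_ax ML).
  exists (@Build_LinearCategory _ (VT V HV M HM) (HVT V HV M HM)
            (WT V HV M HM (ml_hopf ML) (lc_W L) (lc_W_ax L))
            (HWT V HV M HM (ml_hopf ML) (lc_W L) (lc_W_ax L))
            (BT V HV M HM (lc_B L) (lc_B_ax L) (ml_lift ML))
            (HBT V HV M HM (lc_B L) (lc_B_ax L) (ml_lift ML))).
  constructor; try reflexivity.
  intros a b c f g H. unfold hom_heq in *. apply inj_pair2 in H.
  simpl. unfold UT in *. simpl in *. rewrite <- H. reflexivity.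
Qed.
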